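(* For any stable pair of cross-intersecting families $(\mathcal{A}, \mathcal{B})$ in $\mathcal{I}_{n, k}^r$, the pair $(\phi(\mathcal{A}), \phi(\mathcal{B}))$ is a cross-intersecting pair of families in $\binom{[n]}{\leq r}$.
   Context: $\Gamma_{n,k}$ is the disjoint union of $n$ copies of $K_k$, with vertices $(i,j)$, $i\in[n]$, $j\in[k]$; $\mathcal{I}_{n,k}^r$ is the set of its independent sets of size $r$. $\binom{[n]}{\le r}$ denotes the set of subsets of $[n]$ of size at most $r$. The projection $\phi:\mathcal{I}_{n,k}^r\to\binom{[n]}{\le r}$ is $\phi(X)=\{i : (i,1)\in X\}$, and $\phi(\mathcal{F})=\{\phi(X):X\in\mathcal{F}\}$. For $i\in[n]$, $s\in[2,k]$: $P_{i,s}(X)=(X\setminus\{(i,s)\})\cup\{(i,1)\}$ if $(i,s)\in X$, else $X$; $\pi_{i,s}(\mathcal{F})=\{P_{i,s}(X): X\in\mathcal{F}\}\cup\{X\in\mathcal{F}: P_{i,s}(X)\in\mathcal{F}\}$. A family is stable if $\pi_{i,s}(\mathcal{F})=\mathcal{F}$ for all $i\in[n],s\in[2,k]$; a pair is stable if both families are. A pair of non-empty families (of non-empty sets) is cross-intersecting if every member of the first meets every member of the second. *)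

(* Defs.v *)
From mathcomp Require Import all_boot.
Set Implicit Arguments. Unset Strict Implicit. Unset Printing Implicit Defensive.

(* Vertices of Gamma_{n,k}: pairs (i,j) with i : 'I_n (the copy) and
   j : 'I_k (the vertex in the copy).  Indices are 0-based, so the paper's
   colour 1 is the ordinal with value 0, and s in [2,k] is an ordinal
   s : 'I_k with 0 < s. *)
Definition vert (n k : nat) := ('I_n * 'I_k)%type.

(* Independent in the disjoint union of n cliques K_k: no two distinct
   vertices lie in the same copy. *)
Definition independent n k (X : {set vert n k}) : bool :=
  [forall x in X, forall y in X, (x.1 == y.1) ==> (x == y)].

Definition indep_sets n k r : {set {set vert n k}} :=
  [set X : {set vert n k} | independent X && (#|X| == r)].

Definition small_sets n r : {set {set 'I_n}} :=
  [set S : {set 'I_n} | #|S| <= r].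

Definition phi n k (X : {set vert n k}) : {set 'I_n} :=
  [set i | [exists j : 'I_k, (val j == 0) && ((i, j) \in X)]].

Definition phiF n k (F : {set {set vert n k}}) : {set {set 'I_n}} :=
  [set phi X | X in F].

(* The colour-1 vertex index, obtained from any s : 'I_k (which forces k > 0). *)
Definition col1 k (s : 'I_k) : 'I_k :=
  Ordinal (leq_ltn_trans (leq0n s) (ltn_ord s)).

Definition Pshift n k (i : 'I_n) (s : 'I_k) (X : {set vert n k}) : {set vert n k} :=
  if (i, s) \in X then (X :\ (i, s)) :|: [set (i, col1 s)] else X.

Definition pishift n k (i : 'I_n) (s : 'I_k) (F : {set {set vert n k}})
  : {set {set vert n k}} :=
  [set Pshift i s X | X in F] :|: [set X in F | Pshift i s X \in F].

Definition stable n k (F : {set {set vert n k}}) : Prop :=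
  forall (i : 'I_n) (s : 'I_k), 0 < val s -> pishift i s F = F.

Definition cross_intersecting (T : finType) (A B : {set {set T}}) : Prop :=
  [/\ A != set0, B != set0,
      (forall X, X \in A -> X != set0),
      (forall Y, Y \in B -> Y != set0) &
      (forall X Y, X \in A -> Y \in B -> X :&: Y != set0)].

(* Main.v *)
Require Import Defs.
From mathcomp Require Import all_boot.
Set Implicit Arguments. Unset Strict Implicit.

Section Key.
Variables (n k r : nat) (A : {set {set vert n k}}) (Y : {set vert n k}).
Hypothesis stA : stable A.
Hypothesis indY : independent Y.
Hypothesis crossY : forall X, X \in A -> X :&: Y != set0.

Definition bad (X : {set vert n k}) : {set vert n k} :=
  [set v in X | (val v.2 != 0) && (v.1 \notin phi Y)].

Lemma key m : forall X, X \in A -> #|bad X| <= m -> phi X :&: phi Y != set0.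
Proof.
elim: m => [|m IH] X XA hm.
- have b0 : bad X = set0 by apply/eqP; rewrite -cards_eq0 -leqn0.
  have := crossY XA; case: (set_0Vmem (X :&: Y)) => [->|[[i t] Hit]]; first by rewrite eqxx.
  move=> _; move: Hit; rewrite inE => /andP[HX HY].
  case: (boolP (val t == 0)) => ht.
    apply/set0Pn; exists i; rewrite !inE; apply/andP; split; apply/existsP; exists t;
      by rewrite ht.
  have : (i, t) \notin bad X by rewrite b0 inE.
  rewrite inE HX ht /= negbK inE => /existsP[j /andP[hj HjY]].
  move: indY => /forallP/(_ (i, j)) /implyP/(_ HjY) /forallP/(_ (i, t)) /implyP/(_ HY).
  rewrite /= eqxx /= => /eqP[ejt]; by rewrite -ejt hj in ht.
- case: (set_0Vmem (bad X)) => [b0|[[i s] Hv]].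
    by apply: IH => //; rewrite b0 cards0.
  move: (Hv); rewrite inE /= => /andP[HvX /andP[hs hi]].
  have hs' : 0 < val s by rewrite lt0n.
  set X' := Pshift i s X.
  have X'A : X' \in A.
    rewrite -(stA i hs'); apply/setUP; left; exact: imset_f.
  have eX' : X' = (X :\ (i, s)) :|: [set (i, col1 s)] by rewrite /X' /Pshift HvX.
  have sub : bad X' \subset bad X :\ (i, s).
    apply/subsetP => w; rewrite !inE eX' !inE => /andP[/orP[/andP[wne wX]|/eqP ->] rest].
      by rewrite wne wX rest.
    by move: rest; rewrite /col1 /=.
  have hc : #|bad X'| <= m.
    move: hm (subset_leq_card sub); rewrite (cardsD1 (i, s) (bad X)) Hv add1n ltnS => h1 h2.
    exact: leq_trans h2 h1.
  have := IH X' X'A hc.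
  case/set0Pn => i' ; rewrite !inE => /andP[/existsP[j /andP[hj Hj]] HY].
  apply/set0Pn; exists i'; rewrite !inE HY andbT.
  move: Hj; rewrite eX' !inE => /orP[/andP[_ Hj]|/eqP[ei _]].
    by apply/existsP; exists j; rewrite hj Hj.
  by move: hi; rewrite -ei inE HY.
Qed.

End Key.

Lemma phi_card n k (X : {set vert n k}) : #|phi X| <= #|X|.
Proof.
have : phi X \subset [set v.1 | v in X].
  apply/subsetP => i; rewrite inE => /existsP[j /andP[_ Hj]].
  by apply/imsetP; exists (i, j).
move=> /subset_leq_card h; apply: leq_trans h _; exact: leq_imset_card.
Qed.

Theorem corollary4p3 (n k r : nat) (A B : {set {set vert n k}}) :
  A \subset indep_sets n k r -> B \subset indep_sets n k r ->
  stable A -> stable B ->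
  cross_intersecting A B ->
  [/\ phiF A \subset small_sets n r, phiF B \subset small_sets n r &
      cross_intersecting (phiF A) (phiF B)].
Proof.
move=> sA sB stA stB [nA nB neA neB cr].
have small : forall F : {set {set vert n k}}, F \subset indep_sets n k r ->
    phiF F \subset small_sets n r.
  move=> F sF; apply/subsetP => S /imsetP[X XF ->].
  move: (subsetP sF X XF); rewrite !inE => /andP[_ /eqP <-]; exact: phi_card.
have pint : forall X Y, X \in A -> Y \in B -> phi X :&: phi Y != set0.
  move=> X Y XA YB.
  have indY : independent Y by move: (subsetP sB Y YB); rewrite inE => /andP[].
  apply: (@key n k A Y stA indY _ #|bad Y X|) => // X0 X0A; exact: cr.
split; [exact: small|exact: small|split].
- case/set0Pn: nA => X XA; apply/set0Pn; exists (phi X); exact: imset_f.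
- case/set0Pn: nB => X XA; apply/set0Pn; exists (phi X); exact: imset_f.
- move=> S /imsetP[X XA ->]; case/set0Pn: nB => Y YB.
  apply/set0Pn; case/set0Pn: (pint X Y XA YB) => i; rewrite inE => /andP[h _].
  by exists i.
- move=> S /imsetP[Y YB ->]; case/set0Pn: nA => X XA.
  apply/set0Pn; case/set0Pn: (pint X Y XA YB) => i; rewrite inE => /andP[_ h].
  by exists i.
- move=> S T /imsetP[X XA ->] /imsetP[Y YB ->]; exact: pint.
Qed.
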